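(* Let $A\subseteq\mathbb{N}$ have natural density $\rho(A)=\lim_{n\to\infty}\kappa_A(n)/n\in[0,1]$. Then $m(A)=\rho(A)\,\omega+o(\omega)$.
   Context: $\mathbb{N}=\{1,2,3,\dots\}$, $\mathbb{N}_0=\mathbb{N}\cup\{0\}$. $\mathbf{No}$ denotes Conway's ordered field of surreal numbers, $\omega=\{0,1,2,\dots\mid\ \}$ its first infinite element. An omnific integer is a surreal $x$ with $x=\{x-1\mid x+1\}$; $\mathbf{Nn}$ (surnatural numbers) is the class of nonnegative omnific integers, $\mathbb{N}_0\subset\mathbf{Nn}$. $o(\omega)$ denotes a surreal $w$ with $w/\omega$ infinitesimal. For $A\subseteq\mathbb{N}$, $\kappa_A(n)=|A\cap\{1,\dots,n\}|$. For $f,g:\mathbb{N}\to\mathbb{N}_0$, $f\overset{\to}{=}g$ means $f(n)=g(n)$ for all $n\ge N$ for some $N$; $f\overset{\to}{<}g$ means $f(n)<g(n)$ for all $n\ge N$ for some $N$. Axiom of Extension (standing assumption): every nondecreasing $f:\mathbb{N}\to\mathbb{N}_0$ has an extension $\hat f:\mathbf{Nn}\to\mathbf{Nn}$ with $\hat f(n)=f(n)$ for $n\in\mathbb{N}$ (constant sequences extend to the same constants, the identity extends to the identity), such that for nondecreasing $f,g$: $f\overset{\to}{=}g\Rightarrow\hat f(\nu)=\hat g(\nu)$ for all $\nu\in\mathbf{Nn}\setminus\mathbb{N}$; $f\overset{\to}{<}g\Rightarrow\hat f(\nu)<\hat g(\nu)$ for all $\nu\in\mathbf{Nn}\setminus\mathbb{N}$;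 and $\widehat{f+g}=\hat f+\hat g$, $\widehat{f\cdot g}=\hat f\cdot\hat g$, $\widehat{f\circ g}=\hat f\circ\hat g$ where defined. The magnum of $A\subseteq\mathbb{N}$ is $m(A):=\hat{\kappa_A}(\omega)$. *)

(* Defs.v *)
From HB Require Import structures.
From mathcomp Require Import all_boot all_order all_algebra.
From mathcomp Require Import all_classical all_reals all_analysis.
Set Implicit Arguments. Unset Strict Implicit. Unset Printing Implicit Defensive.
Import Order.TTheory GRing.Theory Num.Theory.
Import numFieldNormedType.Exports.
Local Open Scope classical_set_scope.
Local Open Scope ring_scope.

(* kappa_A(n) = |A ∩ {1,...,n}| ; A ⊆ ℕ = {1,2,...} is given by a predicate,
   whose value at 0 is irrelevant. *)
Definition kappa (A : pred nat) (n : nat) : nat := count A (iota 1 n).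

Definition nondecr (f : nat -> nat) : Prop :=
  forall n m : nat, (0 < n)%N -> (n <= m)%N -> (f n <= f m)%N.

Definition ev_eq (f g : nat -> nat) : Prop :=
  exists N : nat, forall n : nat, (N <= n)%N -> f n = g n.
Definition ev_lt (f g : nat -> nat) : Prop :=
  exists N : nat, forall n : nat, (N <= n)%N -> (f n < g n)%N.

Definition nonstd_Nn (F : realFieldType) (Nn : F -> Prop) (x : F) : Prop :=
  Nn x /\ forall n : nat, x <> n%:R.

Definition surnat_class (F : realFieldType) (Nn : F -> Prop) : Prop :=
  (forall n : nat, Nn n%:R) /\ (forall x, Nn x -> 0 <= x).

Record extension_axiom (F : realFieldType) (Nn : F -> Prop)
    (ext : (nat -> nat) -> F -> F) : Prop := {
  ext_Nn : forall f, nondecr f -> forall x, Nn x -> Nn (ext f x);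
  ext_nat : forall f, nondecr f -> forall n : nat, (0 < n)%N ->
      ext f n%:R = (f n)%:R;
  ext_const : forall (c : nat) x, Nn x -> ext (fun _ => c) x = c%:R;
  ext_id : forall x, Nn x -> ext (fun n => n) x = x;
  ext_ev_eq : forall f g, nondecr f -> nondecr g -> ev_eq f g ->
      forall nu, nonstd_Nn Nn nu -> ext f nu = ext g nu;
  ext_ev_lt : forall f g, nondecr f -> nondecr g -> ev_lt f g ->
      forall nu, nonstd_Nn Nn nu -> ext f nu < ext g nu;
  ext_add : forall f g, nondecr f -> nondecr g -> forall x, Nn x ->
      ext (fun n => (f n + g n)%N) x = ext f x + ext g x;
  ext_mul : forall f g, nondecr f -> nondecr g -> forall x, Nn x ->
      ext (fun n => (f n * g n)%N) x = ext f x * ext g x;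
  ext_comp : forall f g, nondecr f -> nondecr g ->
      (forall n, (0 < n)%N -> (0 < g n)%N) -> forall x, Nn x ->
      ext (fun n => f (g n)) x = ext f (ext g x)
}.

Definition infinitesimal (F : realFieldType) (x : F) : Prop :=
  forall n : nat, (0 < n)%N -> `|x| < n%:R^-1.

Definition little_o_omega (F : realFieldType) (omega w : F) : Prop :=
  infinitesimal (w / omega).

Definition has_density (R : realType) (A : pred nat) (rho : R) : Prop :=
  (fun n : nat => (kappa A n)%:R / n%:R : R) @ \oo --> rho.

(* Main.v *)
Require Import Defs.
From HB Require Import structures.
From mathcomp Require Import all_boot all_order all_algebra.
From mathcomp Require Import all_classical all_reals all_analysis.
From mathcomp Require Import lra.
Import Order.TTheory GRing.Theory Num.Theory.
Local Open Scope classical_set_scope.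
Local Open Scope ring_scope.

Lemma near_oo_nat (P : nat -> Prop) :
  (\forall n \near \oo, P n) -> exists N, forall n, (N <= n)%N -> P n.
Proof. by case=> N _ HN; exists N => n Hn; apply: HN. Qed.
Arguments near_oo_nat {P}.

Lemma kappa_mono (A : pred nat) : nondecr (kappa A).
Proof.
move=> n m _ /subnKC <-; rewrite /kappa iotaD count_cat; exact: leq_addr.
Qed.

Lemma mulc_mono (c : nat) {f} : nondecr f -> nondecr (fun n => (c * f n)%N).
Proof. by move=> Hf n m Hn Hnm; rewrite leq_mul2l Hf ?orbT. Qed.

Lemma id_mono : nondecr (fun n => n).
Proof. by move=> n m. Qed.

Lemma const_mono (c : nat) : nondecr (fun _ => c).
Proof. by move=> n m. Qed.

Lemma add_mono {f g} : nondecr f -> nondecr g -> nondecr (fun n => (f n + g n)%N).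
Proof. by move=> Hf Hg n m Hn Hnm; rewrite leq_add ?Hf ?Hg. Qed.

Theorem theorem6p7 (R : realType) (F : realFieldType)
    (iota : {rmorphism R -> F}) (iota_mono : {mono iota : x y / x <= y})
    (Nn : F -> Prop) (omega : F) (ext : (nat -> nat) -> F -> F)
    (HNn : surnat_class Nn) (Homega_Nn : Nn omega)
    (Homega_inf : forall n : nat, n%:R < omega)
    (Hext : extension_axiom Nn ext)
    (A : pred nat) (rho : R) (Hrho : has_density A rho) :
  exists w : F, little_o_omega omega w /\
    ext (kappa A) omega = iota rho * omega + w.
Proof.
set E := ext (kappa A) omega.
exists (E - iota rho * omega); split; last by rewrite addrC subrK.
have om0 : 0 < omega by have := Homega_inf 0.
have nstd : nonstd_Nn Nn omega.
  by split => // n Hn; have := Homega_inf n; rewrite Hn ltxx.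
have extc : forall (c : nat) f, nondecr f -> ext (fun n => (c * f n)%N) omega = c%:R * ext f omega.
  move=> c f Hf; have := ext_mul Hext (const_mono c) Hf Homega_Nn.
  by rewrite (ext_const Hext _ Homega_Nn).
have extid := ext_id Hext Homega_Nn.
have rho0 : 0 <= rho.
  case: (lerP 0 rho) => // Hneg.
  have [N HN] := near_oo_nat (cvgr_lt _ Hrho _ Hneg).
  have := HN N (leqnn N); rewrite ltNge => /negP; case.
  by rewrite divr_ge0.
move=> n n0.
set q := (2 * n)%N.
have q0 : (0 < q)%N by rewrite muln_gt0 n0.
set p := Num.trunc (q%:R * rho).
have /andP [Hp1 Hp2] := truncn_itv (mulr_ge0 (ler0n _ q) rho0).
rewrite -/p in Hp1 Hp2.
have up : (q%:R * E < (p.+1)%:R * omega).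
  have Hlt : rho < (p.+1)%:R / q%:R by rewrite ltr_pdivlMr ?ltr0n // mulrC.
  have [N HN] := near_oo_nat (cvgr_lt _ Hrho _ Hlt).
  have ev : ev_lt (fun k => (q * kappa A k)%N) (fun k => (p.+1 * k)%N).
    exists (maxn N 1) => k Hk.
    have Hk1 : (0 < k)%N by apply: leq_trans Hk; rewrite leq_maxr.
    have := HN k (leq_trans (leq_maxl _ _) Hk).
    rewrite ltr_pdivrMr ?ltr0n // mulrAC ltr_pdivlMr ?ltr0n //.
    by rewrite -!natrM ltr_nat mulnC.
  have := ext_ev_lt Hext (mulc_mono q (kappa_mono A)) (mulc_mono p.+1 id_mono) ev nstd.
  by rewrite !extc ?extid //; exact: kappa_mono.
have lo : (p%:R * omega < q%:R * E + omega).
  have Hlt : (p%:R - 1) / q%:R < rho.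
    rewrite ltr_pdivrMr ?ltr0n // mulrC.
    by apply: lt_le_trans Hp1; rewrite ltrBlDr ltrDl.
  have [N HN] := near_oo_nat (cvgr_gt _ Hrho _ Hlt).
  have ev : ev_lt (fun k => (p * k)%N) (fun k => (q * kappa A k + k)%N).
    exists (maxn N 1) => k Hk.
    have Hk1 : (0 < k)%N by apply: leq_trans Hk; rewrite leq_maxr.
    have := HN k (leq_trans (leq_maxl _ _) Hk).
    rewrite ltr_pdivrMr ?ltr0n // mulrAC ltr_pdivlMr ?ltr0n //.
    rewrite mulrBl mul1r ltrBlDr -!natrM -natrD ltr_nat.
    by rewrite [(kappa A k * _)%N]mulnC.
  have := ext_ev_lt Hext (mulc_mono p id_mono)
     (add_mono (mulc_mono q (kappa_mono A)) id_mono) ev nstd.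
  rewrite extc; last exact: id_mono.
  rewrite (ext_add Hext (mulc_mono q (kappa_mono A)) id_mono Homega_Nn).
  by rewrite extc ?extid //; exact: kappa_mono.
have Hr1 : p%:R <= q%:R * iota rho.
  by have := Hp1; rewrite -iota_mono rmorphM /= !rmorph_nat.
have Hr2 : q%:R * iota rho < p.+1%:R.
  by have := Hp2; rewrite -(leW_mono iota_mono) rmorphM /= !rmorph_nat.
have omne : omega != 0 by rewrite gt_eqF.
set e := E / omega.
have u' : q%:R * e < p.+1%:R by rewrite /e mulrA ltr_pdivrMr.
have l' : p%:R < q%:R * e + 1 by rewrite /e mulrA -ltrBlDr ltr_pdivlMr // mulrBl mul1r ltrBlDr.
have -> : (E - iota rho * omega) / omega = e - iota rho by rewrite mulrBl mulfK.
have m0 : 0 < n%:R :> F by rewrite ltr0n.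
move: u' l' Hr1 Hr2; rewrite /q natrM => u' l' Hr1 Hr2.
rewrite ltr_norml; apply/andP; split; rewrite -(ltr_pM2r m0) ?mulNr mulVf ?gt_eqF //.
  nra.
nra.
Qed.
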